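(* With respect to the bracket $\{-,-\}_{\mathrm{loc}}$ on $\mathfrak h_{\mathrm{reg}}$, the functions $x_i$ and $f_{ij}=\sum_\alpha a_i^\alpha b_j^\alpha$ satisfy $\{x_i,x_k\}=0$, $\{x_i,f_{jk}\}=\delta_{ik}x_if_{jk}$ and $$\begin{aligned}\{f_{ij},f_{kl}\}=&\tfrac12 f_{ij}f_{kl}\Big[\delta_{(i\ne k)}\tfrac{x_i+x_k}{x_i-x_k}+\delta_{(j\ne l)}\tfrac{x_j+x_l}{x_j-x_l}+\delta_{(k\ne j)}\tfrac{x_k+x_j}{x_k-x_j}+\delta_{(l\ne i)}\tfrac{x_l+x_i}{x_l-x_i}\Big]\\&+\tfrac12 f_{il}f_{kj}\Big[\delta_{(i\ne k)}\tfrac{x_i+x_k}{x_i-x_k}+\delta_{(j\ne l)}\tfrac{x_j+x_l}{x_j-x_l}+\tfrac{x_k+qx_j}{x_k-qx_j}-\tfrac{x_i+qx_l}{x_i-qx_l}\Big]\\&+\tfrac12 f_{ij}f_{il}\Big[\delta_{(i\ne k)}\tfrac{x_k+x_i}{x_k-x_i}+\tfrac{x_i+qx_l}{x_i-qx_l}\Big]+\tfrac12 f_{ij}f_{jl}\Big[\delta_{(j\ne k)}\tfrac{x_j+x_k}{x_j-x_k}-\tfrac{x_j+qx_l}{x_j-qx_l}\Big]\\&+\tfrac12 f_{kj}f_{kl}\Big[\delta_{(i\ne k)}\tfrac{x_k+x_i}{x_k-x_i}-\tfrac{x_k+qx_j}{x_k-qx_j}\Big]+\tfrac12 f_{lj}f_{kl}\Big[\delta_{(i\ne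 l)}\tfrac{x_i+x_l}{x_i-x_l}+\tfrac{x_l+qx_j}{x_l-qx_j}\Big].\end{aligned}$$ Moreover, setting $T=\sum_k Z_{kk}=\frac{q}{1-q}\sum_k f_{kk}$ (the pullback of $\operatorname{tr}Z$), and $V_{ik}=\frac{x_i+x_k}{x_i-x_k}-\frac{x_i+qx_k}{x_i-qx_k}$, $$\{x_i,T\}=\tfrac{q}{1-q}x_if_{ii},\quad \{a_i^\gamma,T\}=-\tfrac{q}{2(1-q)}\sum_{k\ne i}V_{ik}(a_i^\gamma-a_k^\gamma)f_{ik},\quad \{b_j^\epsilon,T\}=\tfrac{q}{2(1-q)}\sum_{k\ne j}(V_{jk}b_j^\epsilon f_{jk}-V_{kj}b_k^\epsilon f_{kj}).$$
   Context: Fix integers $n,d\ge1$ and $q\in\mathbb C^\times$ not a root of unity. Greek indices range over $\{1,\dots,d\}$; $o(\alpha,\beta)=0,1,-1$ according as $\alpha=\beta$, $\alpha<\beta$, $\alpha>\beta$; $\delta_{(i\ne j)}=1-\delta_{ij}$, $\delta_{(\alpha<\beta)}=1$ if $\alpha<\beta$ and $0$ otherwise. Let $\mathfrak h$ be the affine space of $(x_i,a_i^\alpha,b_i^\alpha)$, $i=1,\dots,n$, subject to $\sum_\alpha a_i^\alpha=1$ for each $i$. Put $f_{ij}=\sum_\alpha a_i^\alpha b_j^\alpha$, $Z_{ij}=\frac{qx_jf_{ij}}{x_i-qx_j}$, $A_\alpha=(a_i^\alpha)_i$ (column), $B_\alpha=(b_i^\alpha)_i$ (row). Let $\mathfrak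 h_{\mathrm{reg}}\subset\mathfrak h$ be the open set where $x_i\neq0$, $x_i\ne x_j$ and $x_i\ne qx_j$ for $i\ne j$, and $Z$ and $Z+A_1B_1+\dots+A_\alpha B_\alpha$ ($\alpha=1,\dots,d$) are invertible. The bracket $\{-,-\}_{\mathrm{loc}}$ on $\mathfrak h_{\mathrm{reg}}$ is the antisymmetric biderivation with $\{x_i,x_j\}=0$, $\{x_i,a_j^\alpha\}=0$, $\{x_i,b_j^\alpha\}=\delta_{ij}x_ib_j^\alpha$, $\{a_i^\alpha,a_j^\beta\}=\tfrac12\delta_{(i\ne j)}\frac{x_i+x_j}{x_i-x_j}(a_i^\alpha a_j^\beta+a_j^\alpha a_i^\beta-a_j^\alpha a_j^\beta-a_i^\alpha a_i^\beta)+\tfrac12 o(\beta,\alpha)(a_i^\alpha a_j^\beta+a_j^\alpha a_i^\beta)+\tfrac12\sum_\gamma o(\alpha,\gamma)a_j^\beta(a_i^\alpha a_j^\gamma+a_j^\alpha a_i^\gamma)-\tfrac12\sum_\gamma o(\beta,\gamma)a_i^\alpha(a_j^\beta a_i^\gamma+a_i^\beta a_j^\gamma)$, $\{a_i^\alpha,b_j^\beta\}=a_i^\alpha Z_{ij}-\delta_{\alpha\beta}Z_{ij}-\tfrac12\delta_{(i\ne j)}\frac{x_i+x_j}{x_i-x_j}(a_i^\alpha-a_j^\alpha)b_j^\beta+\delta_{(\alpha<\beta)}a_i^\alpha b_j^\beta+a_i^\alpha\sum_{\gamma=1}^{\beta-1}a_i^\gamma(b_j^\gamma-b_j^\beta)-\delta_{\alpha\beta}\sum_{\gamma=1}^{\beta-1}a_i^\gamma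 b_j^\gamma-\tfrac12\sum_\gamma o(\alpha,\gamma)b_j^\beta(a_i^\alpha a_j^\gamma+a_j^\alpha a_i^\gamma)$, $\{b_i^\alpha,b_j^\beta\}=\tfrac12\delta_{(i\ne j)}\frac{x_i+x_j}{x_i-x_j}(b_i^\alpha b_j^\beta+b_j^\alpha b_i^\beta)-b_i^\alpha Z_{ij}+b_j^\beta Z_{ji}+\tfrac12 o(\beta,\alpha)(b_i^\alpha b_j^\beta-b_j^\alpha b_i^\beta)-b_i^\alpha\sum_{\gamma=1}^{\beta-1}a_i^\gamma(b_j^\gamma-b_j^\beta)+b_j^\beta\sum_{\gamma=1}^{\alpha-1}a_j^\gamma(b_i^\gamma-b_i^\alpha)$. (These formulas are compatible with the constraints $\sum_\alpha a_i^\alpha=1$.) *)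

(* Defs.v *)
From HB Require Import structures.
From mathcomp Require Import all_boot all_order all_algebra.
Set Implicit Arguments. Unset Strict Implicit. Unset Printing Implicit Defensive.
Import Order.TTheory GRing.Theory Num.Theory.
Local Open Scope ring_scope.

Inductive expr (V : Type) (R : Type) :=
| EVar of V
| EConst of R
| EAdd of expr V R & expr V R
| EMul of expr V R & expr V R.

Section Expr.
Variables (V : eqType) (R : comNzRingType).

Fixpoint eval (e : expr V R) (p : V -> R) : R :=
  match e with
  | EVar v => p v
  | EConst c => c
  | EAdd e1 e2 => eval e1 p + eval e2 p
  | EMul e1 e2 => eval e1 p * eval e2 p
  end.

Fixpoint pderiv (u : V) (e : expr V R) : expr V R :=
  match e with
  | EVar v => EConst V (if v == u then 1 else 0)
  | EConst _ => EConst V 0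
  | EAdd e1 e2 => EAdd (pderiv u e1) (pderiv u e2)
  | EMul e1 e2 => EAdd (EMul (pderiv u e1) e2) (EMul e1 (pderiv u e2))
  end.

Definition esum (s : seq (expr V R)) : expr V R := foldr (@EAdd V R) (EConst V 0) s.
End Expr.

(* indices i : 'I_n stand for 1..n, Greek indices al : 'I_d stand for 1..d (same order) *)
Definition var (n d : nat) : finType := ('I_n + ('I_n * 'I_d) + ('I_n * 'I_d))%type.
Definition vX {n d : nat} (i : 'I_n) : var n d := inl (inl i).
Definition vA {n d : nat} (i : 'I_n) (al : 'I_d) : var n d := inl (inr (i, al)).
Definition vB {n d : nat} (i : 'I_n) (al : 'I_d) : var n d := inr (i, al).

Section Bracket.
Variables (C : numClosedFieldType) (n d : nat) (q : C).
Implicit Types (p : var n d -> C) (i j : 'I_n) (al be : 'I_d).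

Definition xv p i := p (vX i).
Definition av p i al := p (vA i al).
Definition bv p i al := p (vB i al).

Definition fv p i j := \sum_(al < d) av p i al * bv p j al.
Definition Zv p i j := q * xv p j * fv p i j / (xv p i - q * xv p j).

Definition ord_sgn al be : C := if al == be then 0 else if (al < be)%N then 1 else -1.
Definition cx p i j := (xv p i + xv p j) / (xv p i - xv p j).

Definition br_xb p i j be : C := (i == j)%:R * xv p i * bv p j be.

Definition br_aa p i al j be : C :=
  2^-1 * (i != j)%:R * cx p i j *
    (av p i al * av p j be + av p j al * av p i be - av p j al * av p j be - av p i al * av p i be)
  + 2^-1 * ord_sgn be al * (av p i al * av p j be + av p j al * av p i be)
  + 2^-1 * \sum_(ga < d) ord_sgn al ga * av p j be * (av p i al * av p j ga + av p j al * av p i ga)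
  - 2^-1 * \sum_(ga < d) ord_sgn be ga * av p i al * (av p j be * av p i ga + av p i be * av p j ga).

Definition br_ab p i al j be : C :=
  av p i al * Zv p i j - (al == be)%:R * Zv p i j
  - 2^-1 * (i != j)%:R * cx p i j * (av p i al - av p j al) * bv p j be
  + (al < be)%N%:R * av p i al * bv p j be
  + av p i al * \sum_(ga < d | (ga < be)%N) av p i ga * (bv p j ga - bv p j be)
  - (al == be)%:R * \sum_(ga < d | (ga < be)%N) av p i ga * bv p j ga
  - 2^-1 * \sum_(ga < d) ord_sgn al ga * bv p j be * (av p i al * av p j ga + av p j al * av p i ga).

Definition br_bb p i al j be : C :=
  2^-1 * (i != j)%:R * cx p i j * (bv p i al * bv p j be + bv p j al * bv p i be)
  - bv p i al * Zv p i j + bv p j be * Zv p j i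
  + 2^-1 * ord_sgn be al * (bv p i al * bv p j be - bv p j al * bv p i be)
  - bv p i al * \sum_(ga < d | (ga < be)%N) av p i ga * (bv p j ga - bv p j be)
  + bv p j be * \sum_(ga < d | (ga < al)%N) av p j ga * (bv p i ga - bv p i al).

(* bracket of two coordinate functions, extended by antisymmetry *)
Definition gbr p (u v : var n d) : C :=
  match u, v with
  | inl (inl _), inl (inl _) => 0
  | inl (inl _), inl (inr _) => 0
  | inl (inl i), inr (j, be) => br_xb p i j be
  | inl (inr _), inl (inl _) => 0
  | inl (inr (i, al)), inl (inr (j, be)) => br_aa p i al j be
  | inl (inr (i, al)), inr (j, be) => br_ab p i al j be
  | inr (i, al), inl (inl j) => - br_xb p j i al
  | inr (i, al), inl (inr (j, be)) => - br_ab p j be i al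
  | inr (i, al), inr (j, be) => br_bb p i al j be
  end.

(* {F,G}_loc at p : the biderivation determined by the brackets of coordinates *)
Definition pbr (F G : expr (var n d) C) p : C :=
  \sum_(u : var n d) \sum_(v : var n d)
     eval (pderiv u F) p * eval (pderiv v G) p * gbr p u v.

Definition xE i : expr (var n d) C := EVar C (vX i).
Definition aE i al : expr (var n d) C := EVar C (vA i al).
Definition bE i al : expr (var n d) C := EVar C (vB i al).
Definition fE i j : expr (var n d) C :=
  esum [seq EMul (aE i al) (bE j al) | al <- enum 'I_d].
Definition TE : expr (var n d) C :=
  EMul (EConst _ (q / (1 - q))) (esum [seq fE k k | k <- enum 'I_n]).

Definition Zmx p : 'M[C]_n := \matrix_(i < n, j < n) Zv p i j.
Definition ABmx p al : 'M[C]_n := \matrix_(i < n, j < n) (av p i al * bv p j al).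

Definition in_hreg p : Prop :=
  [/\ (forall i, \sum_(al < d) av p i al = 1),
      (forall i, xv p i != 0),
      (forall i j, i != j -> xv p i != xv p j /\ xv p i != q * xv p j),
      Zmx p \in unitmx &
      (forall al : 'I_d, Zmx p + \sum_(be < d | (be <= al)%N) ABmx p be \in unitmx)].

End Bracket.

Arguments xE {C n d} i.
Arguments aE {C n d} i al.
Arguments bE {C n d} i al.
Arguments fE {C n d} i j.
Arguments TE {C n d} q.

(* Main.v *)
Require Import Defs.
From HB Require Import structures.
From mathcomp Require Import all_boot all_order all_algebra.
From mathcomp Require Import ring.
Set Implicit Arguments. Unset Strict Implicit. Unset Printing Implicit Defensive.
Import Order.TTheory GRing.Theory Num.Theory.
Local Open Scope ring_scope.
Section Infra.
Variables (C : numClosedFieldType) (n d : nat) (q : C) (p : var n d -> C).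

Definition dv (F : expr (var n d) C) u := eval (pderiv u F) p.

Definition sumV (H : var n d -> C) :=
  \sum_(i < n) H (vX i) + \sum_(i < n) \sum_(al < d) H (vA i al)
  + \sum_(i < n) \sum_(al < d) H (vB i al).

Lemma sum_pair (F : 'I_n * 'I_d -> C) :
  \sum_(u : 'I_n * 'I_d) F u = \sum_(i < n) \sum_(al < d) F (i, al).
Proof. by rewrite pair_big; apply: eq_bigr => -[]. Qed.

Lemma sumVE (H : var n d -> C) : \sum_(u : var n d) H u = sumV H.
Proof. by rewrite /sumV !big_sumType !sum_pair. Qed.

Lemma eq_sumV H1 H2 : H1 =1 H2 -> sumV H1 = sumV H2.
Proof.
move=> h; rewrite /sumV; congr (_ + _ + _); do ?[apply: eq_bigr => ? _]; by rewrite h.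
Qed.

Lemma pbr_ext F G DF DG : dv F =1 DF -> dv G =1 DG ->
  pbr q F G p = sumV (fun u => sumV (fun v => DF u * DG v * gbr q p u v)).
Proof.
move=> hF hG; rewrite /pbr sumVE; apply: eq_sumV => u.
rewrite sumVE; apply: eq_sumV => v.
by rewrite -/(dv F u) -/(dv G v) hF hG.
Qed.
End Infra.
Section Deriv.
Variables (C : numClosedFieldType) (n d : nat) (q : C) (p : var n d -> C).

Lemma eval_esum (s : seq (expr (var n d) C)) :
  eval (esum s) p = \sum_(e <- s) eval e p.
Proof. elim: s => [|e s IH]; by rewrite ?big_nil ?big_cons //= IH. Qed.

Lemma pderiv_esum u (s : seq (expr (var n d) C)) :
  pderiv u (esum s) = esum (map (pderiv u) s).
Proof. by elim: s => [|e s IH] //=; rewrite IH. Qed.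

Definition dF (i j : 'I_n) (u : var n d) : C :=
  match u with
  | inl (inl _) => 0
  | inl (inr (i', al)) => (i' == i)%:R * bv p j al
  | inr (j', al) => (j' == j)%:R * av p i al
  end.

Lemma sum_delta (al : 'I_d) (F : 'I_d -> C) (b : bool) :
  \sum_(be < d) (if (b && (be == al)) then 1 else 0) * F be = b%:R * F al.
Proof.
rewrite (bigD1 al) //= eqxx andbT big1 ?addr0.
  by case: b; rewrite ?mul1r ?mul0r.
by move=> be /negbTE ->; rewrite andbF mul0r.
Qed.

Lemma eqAA (i i' : 'I_n) (be al : 'I_d) :
  (vA i be == vA i' al :> var n d) = (i' == i) && (be == al).
Proof.
rewrite [i' == i]eq_sym; apply/eqP/andP => [[-> ->]|[/eqP -> /eqP ->]] //.
Qed.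
Lemma eqBB (i i' : 'I_n) (be al : 'I_d) :
  (vB i be == vB i' al :> var n d) = (i' == i) && (be == al).
Proof.
rewrite [i' == i]eq_sym; apply/eqP/andP => [[-> ->]|[/eqP -> /eqP ->]] //.
Qed.

Lemma dv_fE i j : dv p (fE i j) =1 dF i j.
Proof.
move=> u; rewrite /dv /fE pderiv_esum eval_esum !big_map /=.
case: u => [[i'|[i' al]]|[j' al]] /=.
- by rewrite big1 // => be _; rewrite /= mul0r mulr0 addr0.
- transitivity (\sum_(be < d) (if ((i' == i) && (be == al)) then 1 else 0) * bv p j be).
    apply: eq_bigr => be _; rewrite /= mulr0 addr0.
    by rewrite -/(vA i be) -/(vA i' al) eqAA.
  by rewrite sum_delta.
- transitivity (\sum_(be < d) (if ((j' == j) && (be == al)) then 1 else 0) * av p i be).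
    apply: eq_bigr => be _; rewrite /= mul0r add0r mulrC.
    by rewrite -/(vB j be) -/(vB j' al) eqBB.
  by rewrite sum_delta.
Qed.

Definition dX (i : 'I_n) (u : var n d) : C :=
  match u with inl (inl i') => (i' == i)%:R | _ => 0 end.

Lemma dv_xE i : dv p (xE i) =1 dX i.
Proof.
case=> [[i'|[i' al]]|[j' al]]; rewrite /dv /= //.
have -> : (vX i == inl (inl i') :> var n d) = (i' == i).
  by rewrite eq_sym; apply/eqP/eqP => [[->]|->].
by case: (i' == i).
Qed.

Definition dA (i : 'I_n) (ga : 'I_d) (u : var n d) : C :=
  match u with inl (inr (i', al)) => ((i' == i) && (al == ga))%:R | _ => 0 end.

Lemma dv_aE i ga : dv p (aE i ga) =1 dA i ga.
Proof.
case=> [[i'|[i' al]]|[j' al]]; rewrite /dv /= //.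
have -> := eqAA i i' ga al; rewrite [ga == al]eq_sym; by case: (_ && _).
Qed.

Definition dB (i : 'I_n) (ga : 'I_d) (u : var n d) : C :=
  match u with inr (i', al) => ((i' == i) && (al == ga))%:R | _ => 0 end.

Lemma dv_bE i ga : dv p (bE i ga) =1 dB i ga.
Proof.
case=> [[i'|[i' al]]|[j' al]]; rewrite /dv /= //.
have -> := eqBB i j' ga al; rewrite [ga == al]eq_sym; by case: (_ && _).
Qed.

Lemma dv_TE : dv p (TE q) =1 (fun u => q / (1 - q) * \sum_(k < n) dF k k u).
Proof.
move=> u; rewrite /dv /TE /= pderiv_esum eval_esum !big_map /= mul0r add0r.
congr (_ * _); rewrite eval_esum !big_map; exact: (eq_bigr _ (fun k _ => dv_fE k k u)).
Qed.
End Deriv.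
Section Part1.
Variables (C : numClosedFieldType) (n d : nat) (q : C) (p : var n d -> C).

Definition Lf (D g : var n d -> C) := sumV (fun v => D v * g v).

Lemma sumV_mulr (c : C) (H : var n d -> C) : c * sumV H = sumV (fun v => c * H v).
Proof.
rewrite /sumV !mulrDr !mulr_sumr; congr (_ + _ + _); apply: eq_bigr => i _;
  by rewrite mulr_sumr.
Qed.

Lemma pbrE F G : pbr q F G p = Lf (dv p F) (fun u => Lf (dv p G) (fun v => gbr q p u v)).
Proof.
rewrite /pbr /Lf sumVE; apply: eq_sumV => u; rewrite sumVE sumV_mulr.
apply: eq_sumV => v /=; by rewrite mulrA.
Qed.

Lemma Lf_ext D D' g : D =1 D' -> Lf D g = Lf D' g.
Proof. by move=> h; apply: eq_sumV => v; rewrite h. Qed.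

Lemma sum0m m (F : 'I_m -> C) : \sum_(i < m) 0 * F i = 0.
Proof. by rewrite big1 // => i _; rewrite mul0r. Qed.

Lemma sum00 m m' (F : 'I_m -> 'I_m' -> C) : \sum_(i < m) \sum_(j < m') 0 * F i j = 0.
Proof. by rewrite big1 // => i _; rewrite sum0m. Qed.

Lemma sum_delta2 (i : 'I_n) (F G : 'I_n -> 'I_d -> C) :
  \sum_(i' < n) \sum_(al < d) (i' == i)%:R * F i' al * G i' al = \sum_(al < d) F i al * G i al.
Proof.
rewrite (bigD1 i) //= [X in _ + X]big1 ?addr0.
  by apply: eq_bigr => al _; rewrite eqxx mul1r.
by move=> k /negbTE hk; apply: big1 => al _; rewrite hk !mul0r.
Qed.

Lemma sum_delta1 (i : 'I_n) (F : 'I_n -> C) :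
  \sum_(i' < n) (i' == i)%:R * F i' = F i.
Proof.
rewrite (bigD1 i) //= eqxx mul1r big1 ?addr0 // => k /negbTE ->; by rewrite mul0r.
Qed.

Lemma sum_delta3 (i : 'I_n) (ga : 'I_d) (F : 'I_n -> 'I_d -> C) :
  \sum_(i' < n) \sum_(al < d) ((i' == i) && (al == ga))%:R * F i' al = F i ga.
Proof.
rewrite (bigD1 i) //= [X in _ + X]big1 ?addr0.
  rewrite (bigD1 ga) //= !eqxx mul1r big1 ?addr0 // => al /negbTE ->.
  by rewrite andbF mul0r.
by move=> k /negbTE hk; apply: big1 => al _; rewrite hk mul0r.
Qed.

Lemma Lf_fE i j g : Lf (dv p (fE i j)) g =
  \sum_(al < d) (bv p j al * g (vA i al) + av p i al * g (vB j al)).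
Proof.
rewrite (Lf_ext g (dv_fE p i j)) /Lf /sumV /= sum0m add0r.
by rewrite !sum_delta2 big_split.
Qed.

Lemma Lf_xE i g : Lf (dv p (xE i)) g = g (vX i).
Proof.
rewrite (Lf_ext g (dv_xE p i)) /Lf /sumV /= !sum00 !addr0.
exact: sum_delta1.
Qed.

Lemma Lf_aE i ga g : Lf (dv p (aE i ga)) g = g (vA i ga).
Proof.
rewrite (Lf_ext g (dv_aE p i ga)) /Lf /sumV /= sum0m sum00 add0r addr0.
exact: sum_delta3.
Qed.

Lemma Lf_bE i ga g : Lf (dv p (bE i ga)) g = g (vB i ga).
Proof.
rewrite (Lf_ext g (dv_bE p i ga)) /Lf /sumV /= sum0m sum00 add0r add0r.
exact: sum_delta3.
Qed.

Lemma sumV_sum (H : 'I_n -> var n d -> C) :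
  sumV (fun v => \sum_(k < n) H k v) = \sum_(k < n) sumV (H k).
Proof.
rewrite /sumV !big_split /=; congr (_ + _ + _).
- by rewrite exchange_big.
- rewrite [RHS]exchange_big; apply: eq_bigr => i _; by rewrite [RHS]exchange_big.
- rewrite [RHS]exchange_big; apply: eq_bigr => i _; by rewrite [RHS]exchange_big.
Qed.

Lemma Lf_TE g : Lf (dv p (TE q)) g = q / (1 - q) * \sum_(k < n) Lf (dv p (fE k k)) g.
Proof.
rewrite (Lf_ext g (dv_TE q p)) /Lf -sumV_sum sumV_mulr.
apply: eq_sumV => v; rewrite -mulrA mulr_suml; congr (_ * _).
by apply: eq_bigr => k _; rewrite dv_fE.
Qed.
End Part1.
Section Part2.
Variables (C : numClosedFieldType) (n d : nat) (q : C) (p : var n d -> C).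

Lemma pbr_xx i k : pbr q (xE i) (xE k) p = 0.
Proof. by rewrite pbrE Lf_xE Lf_xE. Qed.

Lemma xf_aux i j k : Lf (dv p (fE j k)) (fun v => gbr q p (vX i) v) = (i == k)%:R * xv p i * fv p j k.
Proof.
rewrite Lf_fE /fv mulr_sumr; apply: eq_bigr => al _ /=.
by rewrite mulr0 add0r /br_xb; ring.
Qed.

Lemma pbr_xf i j k : pbr q (xE i) (fE j k) p = (i == k)%:R * xv p i * fv p j k.
Proof. by rewrite pbrE Lf_xE xf_aux. Qed.

Lemma pbr_xT i : pbr q (xE i) (TE q) p = q / (1 - q) * xv p i * fv p i i.
Proof.
rewrite pbrE Lf_xE Lf_TE.
rewrite (eq_bigr (fun k => (k == i)%:R * (xv p i * fv p k k))).
  by rewrite sum_delta1 mulrA.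
by move=> k _; rewrite xf_aux eq_sym mulrA.
Qed.
End Part2.
Section Sums.
Variables (C : numClosedFieldType) (d : nat).
Implicit Types (u v w : 'I_d -> C) (x y : 'I_d).

Definition S u := \sum_(x < d) u x.
Definition Rs x w := \sum_(ga < d) ord_sgn C x ga * w ga.
Definition Pl x w := \sum_(ga < d) (ga < x)%N%:R * w ga.
Definition Pg x w := \sum_(ga < d) (x < ga)%N%:R * w ga.
Definition Bl u v := \sum_(al < d) \sum_(be < d) (al < be)%N%:R * (u al * v be).
Definition fm u v := fun x => u x * v x.
Definition uR u w := fun x => u x * Rs x w.
Definition uP u w := fun x => u x * Pl x w.

Lemma ord_sgnE x y : ord_sgn C x y = (x < y)%N%:R - (y < x)%N%:R.
Proof.
rewrite /ord_sgn; case: (ltngtP x y) => h.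
- by rewrite ifF ?subr0 //; apply/negbTE; rewrite neq_ltn h.
- by rewrite ifF ?sub0r //; apply/negbTE; rewrite neq_ltn h orbT.
- by rewrite ifT ?subrr //; apply/eqP/val_inj.
Qed.

Lemma sum_cond (P : pred 'I_d) w : \sum_(ga < d | P ga) w ga = \sum_(ga < d) (P ga)%:R * w ga.
Proof. rewrite big_mkcond; apply: eq_bigr => ga _; by case: (P ga); rewrite ?mul1r ?mul0r. Qed.

Lemma Rs_E x w : Rs x w = Pg x w - Pl x w.
Proof.
rewrite /Rs /Pg /Pl -sumrB; apply: eq_bigr => ga _; rewrite ord_sgnE; ring.
Qed.

Lemma PlPg x w : Pl x w + Pg x w = S w - w x.
Proof.
rewrite /Pl /Pg /S -big_split /= (bigD1 x) //= [in RHS](bigD1 x) //= ltnn !mul0r add0r.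
rewrite add0r [w x + _]addrC addrK; apply: eq_bigr => ga hga; case: (ltngtP ga x) => h; rewrite ?mul1r ?mul0r ?addr0 ?add0r //.
by move: hga; rewrite (val_inj h) eqxx.
Qed.

Lemma S_uP u w : S (uP u w) = Bl w u.
Proof.
rewrite /S /uP /Bl /Pl exchange_big; apply: eq_bigr => al _.
rewrite mulr_sumr; apply: eq_bigr => be _; ring.
Qed.

Lemma S_uR u w : S (uR u w) = Bl u w - Bl w u.
Proof.
transitivity (S (fun x => u x * Pg x w) - S (uP u w)).
  by rewrite /S -sumrB; apply: eq_bigr => x _; rewrite /uR Rs_E mulrBr.
rewrite S_uP; congr (_ - _); rewrite /S /Bl; apply: eq_bigr => al _.
rewrite /Pg mulr_sumr; apply: eq_bigr => be _; ring.
Qed.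

Lemma Bl_sym u v : Bl u v + Bl v u = S u * S v - S (fm u v).
Proof.
rewrite /Bl [X in _ + X]exchange_big -big_split /= /S /fm mulr_suml -sumrB.
apply: eq_bigr => al _; rewrite -big_split mulr_sumr /= (bigD1 al) //= [X in _ = X - _](bigD1 al) //=.
rewrite ltnn !mul0r !add0r [u al * v al + _]addrC addrK; apply: eq_bigr => be hbe.
case: (ltngtP al be) => h; rewrite ?mul1r ?mul0r ?addr0 ?add0r //; try ring.
by move: hbe; rewrite (val_inj h) eqxx.
Qed.

Lemma S_fmC u v : S (fm u v) = S (fm v u).
Proof. by apply: eq_bigr => x _; rewrite /fm mulrC. Qed.

Lemma S_fm_uP u v w : S (fm u (uP v w)) = Bl w (fm v u).
Proof. rewrite -S_uP; apply: eq_bigr => x _; rewrite /fm /uP; ring. Qed.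

Lemma S_fm_uP2 u v w : S (fm (uP u w) v) = Bl w (fm u v).
Proof. rewrite -S_uP; apply: eq_bigr => x _; rewrite /fm /uP; ring. Qed.

Inductive kind := KP | KD | KL | KG.
Record term := Tm { tc : C; tk : kind; tu : 'I_d -> C; tv : 'I_d -> C }.

Definition kv k x y : C :=
  match k with KP => 1 | KD => (x == y)%:R | KL => (x < y)%N%:R | KG => (y < x)%N%:R end.
Definition ev k u v : C :=
  match k with KP => S u * S v | KD => S (fm u v) | KL => Bl u v | KG => Bl v u end.

Definition dform (l : seq term) al be :=
  \sum_(t <- l) tc t * (kv (tk t) al be * (tu t al * tv t be)).
Definition devl (l : seq term) := \sum_(t <- l) tc t * ev (tk t) (tu t) (tv t).

Lemma dterm c k u v :
  \sum_(al < d) \sum_(be < d) c * (kv k al be * (u al * v be)) = c * ev k u v.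
Proof.
case: k => /=.
- rewrite /S mulr_suml mulr_sumr; apply: eq_bigr => al _.
  rewrite mulr_sumr mulr_sumr; apply: eq_bigr => be _; ring.
- rewrite /S /fm mulr_sumr; apply: eq_bigr => al _.
  rewrite (bigD1 al) //= [X in _ + X]big1 ?addr0 ?eqxx; first by rewrite mul1r mulrA.
  by move=> be /negbTE; rewrite eq_sym => ->; rewrite mul0r mulr0.
- rewrite /Bl mulr_sumr; apply: eq_bigr => al _; by rewrite mulr_sumr.
- rewrite /Bl exchange_big mulr_sumr; apply: eq_bigr => al _; rewrite mulr_sumr.
  apply: eq_bigr => be _; ring.
Qed.

Lemma dformE l : \sum_(al < d) \sum_(be < d) dform l al be = devl l.
Proof.
elim: l => [|t l IH].
  by rewrite /devl big_nil big1 // => al _; rewrite big1 // => be _; rewrite /dform big_nil.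
have -> : devl (t :: l) = tc t * ev (tk t) (tu t) (tv t) + devl l by rewrite /devl big_cons.
rewrite -IH -dterm -big_split /=; apply: eq_bigr => al _.
rewrite -big_split /=; apply: eq_bigr => be _; by rewrite /dform big_cons.
Qed.

Inductive kind1 := K1P | K1D | K1L | K1G.
Record term1 := T1 { tc1 : C; tk1 : kind1; tu1 : 'I_d -> C }.
Definition kv1 k (c be : 'I_d) : C :=
  match k with K1P => 1 | K1D => (be == c)%:R | K1L => (be < c)%N%:R | K1G => (c < be)%N%:R end.
Definition ev1 k c u : C :=
  match k with K1P => S u | K1D => u c | K1L => Pl c u | K1G => Pg c u end.
Definition sform c (l : seq term1) be := \sum_(t <- l) tc1 t * (kv1 (tk1 t) c be * tu1 t be).
Definition sevl c (l : seq term1) := \sum_(t <- l) tc1 t * ev1 (tk1 t) c (tu1 t).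

Lemma sterm c a k u : \sum_(be < d) a * (kv1 k c be * u be) = a * ev1 k c u.
Proof.
rewrite -mulr_sumr; congr (_ * _); case: k => /=.
- by apply: eq_bigr => be _; rewrite mul1r.
- rewrite (bigD1 c) //= eqxx mul1r big1 ?addr0 // => be /negbTE ->; by rewrite mul0r.
- by [].
- by [].
Qed.

Lemma sformE c l : \sum_(be < d) sform c l be = sevl c l.
Proof.
elim: l => [|t l IH].
  by rewrite /sevl big_nil big1 // => be _; rewrite /sform big_nil.
have -> : sevl c (t :: l) = tc1 t * ev1 (tk1 t) c (tu1 t) + sevl c l by rewrite /sevl big_cons.
rewrite -IH -sterm -big_split /=; apply: eq_bigr => be _.
by rewrite /sform big_cons.
Qed.
End Sums.
Section Pointwise.
Variables (C : numClosedFieldType) (n d : nat) (q : C) (p : var n d -> C).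
Local Notation A := (av p).
Local Notation B := (bv p).
Local Notation h := (2^-1 : C).

Lemma sumR2 (x : 'I_d) (c c1 c2 : C) (u v : 'I_d -> C) :
  \sum_(ga < d) ord_sgn C x ga * c * (c1 * u ga + c2 * v ga) = c * (c1 * Rs x u + c2 * Rs x v).
Proof.
rewrite /Rs !mulr_sumr -big_split mulr_sumr; apply: eq_bigr => ga _ /=; ring.
Qed.

Lemma sumPl1 (x : 'I_d) (c : C) (u v : 'I_d -> C) :
  \sum_(ga < d | (ga < x)%N) u ga * (v ga - c) = Pl x (fm u v) - c * Pl x u.
Proof.
rewrite sum_cond /Pl /fm mulr_sumr -sumrB; apply: eq_bigr => ga _; ring.
Qed.

Lemma sumPl2 (x : 'I_d) (u v : 'I_d -> C) :
  \sum_(ga < d | (ga < x)%N) u ga * v ga = Pl x (fm u v).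
Proof. by rewrite sum_cond. Qed.

Definition L1 i j k l : seq (term C d) :=
  let c1 := h * (i != k)%:R * cx p i k in
  [:: Tm c1 KP (fm (A i) (B j)) (fm (A k) (B l));
      Tm c1 KP (fm (A k) (B j)) (fm (A i) (B l));
      Tm (- c1) KP (fm (A k) (B j)) (fm (A k) (B l));
      Tm (- c1) KP (fm (A i) (B j)) (fm (A i) (B l));
      Tm h KG (fm (A i) (B j)) (fm (A k) (B l));
      Tm (- h) KL (fm (A i) (B j)) (fm (A k) (B l));
      Tm h KG (fm (A k) (B j)) (fm (A i) (B l));
      Tm (- h) KL (fm (A k) (B j)) (fm (A i) (B l));
      Tm h KP (uR (fm (A i) (B j)) (A k)) (fm (A k) (B l));
      Tm h KP (uR (fm (A k) (B j)) (A i)) (fm (A k) (B l));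
      Tm (- h) KP (fm (A i) (B j)) (uR (fm (A k) (B l)) (A i));
      Tm (- h) KP (fm (A i) (B j)) (uR (fm (A i) (B l)) (A k))].

Lemma T1pt i j k l al be :
  B j al * B l be * br_aa p i al k be = dform (L1 i j k l) al be.
Proof.
rewrite /br_aa !sumR2 /dform /L1 !big_cons big_nil /= !ord_sgnE /fm /uR.
ring.
Qed.

Definition L2 i j k l : seq (term C d) :=
  let Z := Zv q p i l in
  let c2 := h * (i != l)%:R * cx p i l in
  [:: Tm Z KP (fm (A i) (B j)) (A k);
      Tm (- Z) KD (B j) (A k);
      Tm (- c2) KP (fm (A i) (B j)) (fm (A k) (B l));
      Tm c2 KP (fm (A l) (B j)) (fm (A k) (B l));
      Tm 1 KL (fm (A i) (B j)) (fm (A k) (B l));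
      Tm 1 KP (fm (A i) (B j)) (uP (A k) (fm (A i) (B l)));
      Tm (-1) KP (fm (A i) (B j)) (uP (fm (A k) (B l)) (A i));
      Tm (-1) KD (B j) (uP (A k) (fm (A i) (B l)));
      Tm (- h) KP (uR (fm (A i) (B j)) (A l)) (fm (A k) (B l));
      Tm (- h) KP (uR (fm (A l) (B j)) (A i)) (fm (A k) (B l))].

Lemma T2pt i j k l al be :
  B j al * A k be * br_ab q p i al l be = dform (L2 i j k l) al be.
Proof.
rewrite /br_ab sumR2 sumPl1 sumPl2 /dform /L2 !big_cons big_nil /= /fm /uR /uP.
ring.
Qed.

Definition L3 i j k l : seq (term C d) :=
  let Z := Zv q p k j in
  let c3 := h * (k != j)%:R * cx p k j in
  [:: Tm (- Z) KP (A i) (fm (A k) (B l));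
      Tm Z KD (A i) (B l);
      Tm c3 KP (fm (A i) (B j)) (fm (A k) (B l));
      Tm (- c3) KP (fm (A i) (B j)) (fm (A j) (B l));
      Tm (-1) KG (fm (A i) (B j)) (fm (A k) (B l));
      Tm (-1) KP (uP (A i) (fm (A k) (B j))) (fm (A k) (B l));
      Tm 1 KP (uP (fm (A i) (B j)) (A k)) (fm (A k) (B l));
      Tm 1 KD (uP (A i) (fm (A k) (B j))) (B l);
      Tm h KP (fm (A i) (B j)) (uR (fm (A k) (B l)) (A j));
      Tm h KP (fm (A i) (B j)) (uR (fm (A j) (B l)) (A k))].

Lemma T3pt i j k l al be :
  A i al * (B l be * - br_ab q p k be j al) = dform (L3 i j k l) al be.
Proof.
rewrite /br_ab sumR2 sumPl1 sumPl2 /dform /L3 !big_cons big_nil /= /fm /uR /uP.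
rewrite [be == al]eq_sym; ring.
Qed.

Definition L4 i j k l : seq (term C d) :=
  let c4 := h * (j != l)%:R * cx p j l in
  [:: Tm c4 KP (fm (A i) (B j)) (fm (A k) (B l));
      Tm c4 KP (fm (A i) (B l)) (fm (A k) (B j));
      Tm (- Zv q p j l) KP (fm (A i) (B j)) (A k);
      Tm (Zv q p l j) KP (A i) (fm (A k) (B l));
      Tm h KG (fm (A i) (B j)) (fm (A k) (B l));
      Tm (- h) KL (fm (A i) (B j)) (fm (A k) (B l));
      Tm (- h) KG (fm (A i) (B l)) (fm (A k) (B j));
      Tm h KL (fm (A i) (B l)) (fm (A k) (B j));
      Tm (-1) KP (fm (A i) (B j)) (uP (A k) (fm (A j) (B l)));
      Tm 1 KP (fm (A i) (B j)) (uP (fm (A k) (B l)) (A j));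
      Tm 1 KP (uP (A i) (fm (A l) (B j))) (fm (A k) (B l));
      Tm (-1) KP (uP (fm (A i) (B j)) (A l)) (fm (A k) (B l))].

Lemma T4pt i j k l al be :
  A i al * (A k be * br_bb q p j al l be) = dform (L4 i j k l) al be.
Proof.
rewrite /br_bb !sumPl1 /dform /L4 !big_cons big_nil /= !ord_sgnE /fm /uR /uP.
ring.
Qed.
End Pointwise.
Section FF.
Variables (C : numClosedFieldType) (n d : nat) (q : C) (p : var n d -> C).

Lemma pbr_ff i j k l : pbr q (fE i j) (fE k l) p =
  devl (L1 p i j k l) + devl (L2 q p i j k l) + devl (L3 q p i j k l) + devl (L4 q p i j k l).
Proof.
rewrite pbrE Lf_fE -!dformE -!big_split /=; apply: eq_bigr => al _.
rewrite !Lf_fE !mulr_sumr -!big_split /=; apply: eq_bigr => be _.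
rewrite -T1pt -T2pt -T3pt -T4pt /vA /vB /=; ring.
Qed.
End FF.
Section FF2.
Variables (C : numClosedFieldType) (n d : nat) (q : C) (p : var n d -> C).
Hypothesis hA : forall i, \sum_(al < d) av p i al = 1.
Hypothesis hq1 : q != 1.
Hypothesis hx0 : forall i, xv p i != 0.
Hypothesis hxq : forall i j, i != j -> xv p i != q * xv p j.

Lemma SA i : S (av p i) = 1. Proof. exact: hA. Qed.
Lemma Sf i j : S (fm (av p i) (bv p j)) = fv p i j. Proof. by []. Qed.
Lemma Sf' i j : S (fm (bv p j) (av p i)) = fv p i j. Proof. by rewrite S_fmC. Qed.
Lemma Bl_swap (u v : 'I_d -> C) : Bl v u = S u * S v - S (fm u v) - Bl u v.
Proof. rewrite -Bl_sym; ring. Qed.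
Lemma S3sw x y z : S (fm (fm (av p x) (bv p y)) (av p z)) = S (fm (fm (av p z) (bv p y)) (av p x)).
Proof. by apply: eq_bigr => al _; rewrite /fm; ring. Qed.

Lemma xq_neq i l : xv p i - q * xv p l != 0.
Proof.
rewrite subr_eq0; case: (eqVneq i l) => [->|ne]; last exact: hxq.
apply/negP => /eqP h.
have : (1 - q) * xv p l == 0 by rewrite mulrBl mul1r -h subrr.
by rewrite mulf_eq0 subr_eq0 eq_sym (negbTE hq1) (negbTE (hx0 l)).
Qed.

Lemma Zq i l : Zv q p i l = 2^-1 * fv p i l * ((xv p i + q * xv p l) / (xv p i - q * xv p l) - 1).
Proof.
by rewrite /Zv; have h := xq_neq i l; field; rewrite h.
Qed.

Lemma cx_del c i k : c * (i != k)%:R * cx p i k = c * cx p i k.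
Proof.
case: (eqVneq i k) => [->|_]; last by rewrite mulr1.
by rewrite /cx subrr invr0 !mulr0.
Qed.

Lemma cxE i k : (i != k)%:R * (xv p i + xv p k) / (xv p i - xv p k) = cx p i k.
Proof.
case: (eqVneq i k) => [->|_]; last by rewrite mul1r.
by rewrite /cx subrr invr0 !mulr0.
Qed.

Lemma cxE' i k : (i != k)%:R * (xv p k + xv p i) / (xv p k - xv p i) = cx p k i.
Proof. by rewrite eq_sym cxE. Qed.

Lemma cxN i k : cx p k i = - cx p i k.
Proof. by rewrite /cx -opprB invrN mulrN addrC. Qed.

Lemma ff_final i j k l :
  let x := xv p in
  let f := fv p in
  pbr q (fE i j) (fE k l) p =
          2^-1 * f i j * f k l *
            ((i != k)%:R * (x i + x k) / (x i - x k) + (j != l)%:R * (x j + x l) / (x j - x l)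
             + (k != j)%:R * (x k + x j) / (x k - x j) + (l != i)%:R * (x l + x i) / (x l - x i))
        + 2^-1 * f i l * f k j *
            ((i != k)%:R * (x i + x k) / (x i - x k) + (j != l)%:R * (x j + x l) / (x j - x l)
             + (x k + q * x j) / (x k - q * x j) - (x i + q * x l) / (x i - q * x l))
        + 2^-1 * f i j * f i l *
            ((i != k)%:R * (x k + x i) / (x k - x i) + (x i + q * x l) / (x i - q * x l))
        + 2^-1 * f i j * f j l *
            ((j != k)%:R * (x j + x k) / (x j - x k) - (x j + q * x l) / (x j - q * x l))
        + 2^-1 * f k j * f k l *
            ((i != k)%:R * (x k + x i) / (x k - x i) - (x k + q * x j) / (x k - q * x j))
        + 2^-1 * f l j * f k l *
            ((i != l)%:R * (x i + x l) / (x i - x l) + (x l + q * x j) / (x l - q * x j)).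
Proof.
move=> x f; rewrite /x /f.
rewrite pbr_ff /devl /L1 /L2 /L3 /L4 !big_cons !big_nil /=.
rewrite !S_uR !S_uP !S_fm_uP !S_fm_uP2.
rewrite (Bl_swap (fm (av p i) (bv p j)) (av p k)) (Bl_swap (fm (av p k) (bv p j)) (av p i)).
rewrite (Bl_swap (fm (av p k) (bv p l)) (av p i)) (Bl_swap (fm (av p i) (bv p l)) (av p k)).
rewrite (Bl_swap (fm (av p i) (bv p j)) (av p l)) (Bl_swap (fm (av p l) (bv p j)) (av p i)).
rewrite (Bl_swap (fm (av p k) (bv p l)) (av p j)) (Bl_swap (fm (av p j) (bv p l)) (av p k)).
rewrite !SA !Sf !Sf' (S3sw k j i) (S3sw i l k) (S3sw l j i) (S3sw j l k).
rewrite !cx_del !cxE !cxE' (cxN i k) (cxN i l) (cxN j k).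
rewrite !Zq.
have h1 := xq_neq i l; have h2 := xq_neq k j; have h3 := xq_neq j l; have h4 := xq_neq l j.
field; by rewrite h1 h2 h3 h4.
Qed.
Definition La i (c : 'I_d) k : seq (term1 C d) :=
  let A := av p in let B := bv p in let h := (2^-1 : C) in
  let c1 := h * (i != k)%:R * cx p i k in
  let Z := Zv q p i k in
  [:: T1 (c1 * A i c) K1P (fm (A k) (B k));
      T1 (c1 * A k c) K1P (fm (A i) (B k));
      T1 (- (c1 * A k c)) K1P (fm (A k) (B k));
      T1 (- (c1 * A i c)) K1P (fm (A i) (B k));
      T1 (h * A i c) K1L (fm (A k) (B k));
      T1 (- (h * A i c)) K1G (fm (A k) (B k));
      T1 (h * A k c) K1L (fm (A i) (B k));
      T1 (- (h * A k c)) K1G (fm (A i) (B k));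
      T1 (h * (A i c * Rs c (A k) + A k c * Rs c (A i))) K1P (fm (A k) (B k));
      T1 (- (h * A i c)) K1P (uR (fm (A k) (B k)) (A i));
      T1 (- (h * A i c)) K1P (uR (fm (A i) (B k)) (A k));
      T1 (A i c * Z) K1P (A k);
      T1 (- Z) K1D (A k);
      T1 (- (c1 * (A i c - A k c))) K1P (fm (A k) (B k));
      T1 (A i c) K1G (fm (A k) (B k));
      T1 (A i c) K1P (uP (A k) (fm (A i) (B k)));
      T1 (- A i c) K1P (uP (fm (A k) (B k)) (A i));
      T1 (-1) K1D (uP (A k) (fm (A i) (B k)));
      T1 (- (h * (A i c * Rs c (A k) + A k c * Rs c (A i)))) K1P (fm (A k) (B k))].

Lemma Lapt i c k be :
  bv p k be * br_aa p i c k be + av p k be * br_ab q p i c k be = sform c (La i c k) be.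
Proof.
rewrite /br_aa /br_ab !sumR2 sumPl1 sumPl2 /sform /La !big_cons big_nil /= !ord_sgnE /fm /uR /uP.
rewrite [c == be]eq_sym; ring.
Qed.

Lemma fmE (u v : 'I_d -> C) x : fm u v x = u x * v x. Proof. by []. Qed.
Lemma uPE (u w : 'I_d -> C) x : uP u w x = u x * Pl x w. Proof. by []. Qed.

Lemma Pg_E c (w : 'I_d -> C) : Pg c w = S w - w c - Pl c w.
Proof. rewrite -PlPg; ring. Qed.

Lemma aT_k i c k : Lf (dv p (fE k k)) (fun v => gbr q p (vA i c) v) =
  - 2^-1 * (cx p i k - (xv p i + q * xv p k) / (xv p i - q * xv p k)) * (av p i c - av p k c) * fv p i k.
Proof.
rewrite Lf_fE.
rewrite (eq_bigr (fun be => sform c (La i c k) be)); last first.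
  by move=> be _; rewrite -Lapt /vA /vB.
rewrite sformE /sevl /La !big_cons big_nil /=.
rewrite !S_uR !S_uP !Pg_E !fmE !uPE.
rewrite (Bl_swap (fm (av p k) (bv p k)) (av p i)) (Bl_swap (fm (av p i) (bv p k)) (av p k)).
rewrite !SA !Sf (S3sw k k i) !cx_del !Zq.
have h1 := xq_neq i k.
field; by rewrite h1.
Qed.

Definition Lb j (c : 'I_d) k : seq (term1 C d) :=
  let A := av p in let B := bv p in let h := (2^-1 : C) in
  let c3 := h * (k != j)%:R * cx p k j in
  let c4 := h * (j != k)%:R * cx p j k in
  let Z := Zv q p k j in
  [:: T1 (- Z) K1P (fm (A k) (B k));
      T1 Z K1D (B k);
      T1 (c3 * B j c) K1P (fm (A k) (B k));
      T1 (- (c3 * B j c)) K1P (fm (A j) (B k));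
      T1 (- B j c) K1L (fm (A k) (B k));
      T1 (- (Pl c (fm (A k) (B j)) - B j c * Pl c (A k))) K1P (fm (A k) (B k));
      T1 (Pl c (fm (A k) (B j))) K1D (B k);
      T1 (h * B j c) K1P (uR (fm (A k) (B k)) (A j));
      T1 (h * B j c) K1P (uR (fm (A j) (B k)) (A k));
      T1 (c4 * B j c) K1P (fm (A k) (B k));
      T1 (c4 * B k c) K1P (fm (A k) (B j));
      T1 (- (B j c * Zv q p j k)) K1P (A k);
      T1 Z K1P (fm (A k) (B k));
      T1 (h * B j c) K1L (fm (A k) (B k));
      T1 (- (h * B j c)) K1G (fm (A k) (B k));
      T1 (- (h * B k c)) K1L (fm (A k) (B j));
      T1 (h * B k c) K1G (fm (A k) (B j));
      T1 (- B j c) K1P (uP (A k) (fm (A j) (B k)));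
      T1 (B j c) K1P (uP (fm (A k) (B k)) (A j));
      T1 (Pl c (fm (A k) (B j)) - B j c * Pl c (A k)) K1P (fm (A k) (B k))].

Lemma Lbpt j c k be :
  bv p k be * - br_ab q p k be j c + av p k be * br_bb q p j c k be = sform c (Lb j c k) be.
Proof.
rewrite /br_bb /br_ab !sumR2 !sumPl1 sumPl2 /sform /Lb !big_cons big_nil /= !ord_sgnE /fm /uR /uP.
ring.
Qed.

Lemma bT_k j c k : Lf (dv p (fE k k)) (fun v => gbr q p (vB j c) v) =
  2^-1 * ((cx p j k - (xv p j + q * xv p k) / (xv p j - q * xv p k)) * bv p j c * fv p j k
   - (cx p k j - (xv p k + q * xv p j) / (xv p k - q * xv p j)) * bv p k c * fv p k j).
Proof.
rewrite Lf_fE.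
rewrite (eq_bigr (fun be => sform c (Lb j c k) be)); last first.
  by move=> be _; rewrite -Lbpt /vA /vB.
rewrite sformE /sevl /Lb !big_cons big_nil /=.
rewrite !S_uR !S_uP !Pg_E !fmE ?uPE.
rewrite (Bl_swap (fm (av p k) (bv p k)) (av p j)) (Bl_swap (fm (av p j) (bv p k)) (av p k)).
rewrite !SA !Sf (S3sw k k j) !cx_del !Zq (cxN j k).
have h1 := xq_neq j k; have h2 := xq_neq k j.
field; by rewrite h1 h2.
Qed.
End FF2.

Unset Implicit Arguments.
Set Strict Implicit.

Theorem mainTheorem2 (C : numClosedFieldType) (n d : nat) (q : C)
  (hn : (1 <= n)%N) (hd : (1 <= d)%N) (hq0 : q != 0)
  (hq : forall m : nat, (0 < m)%N -> q ^+ m != 1)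
  (p : var n d -> C) (hp : in_hreg q p) :
  let x := xv p in
  let f := fv p in
  let V i k := (x i + x k) / (x i - x k) - (x i + q * x k) / (x i - q * x k) in
  [/\ (forall i k : 'I_n, pbr q (xE i) (xE k) p = 0),
      (forall i j k : 'I_n, pbr q (xE i) (fE j k) p = (i == k)%:R * x i * f j k)
      & (forall i j k l : 'I_n, pbr q (fE i j) (fE k l) p =
          2^-1 * f i j * f k l *
            ((i != k)%:R * (x i + x k) / (x i - x k) + (j != l)%:R * (x j + x l) / (x j - x l)
             + (k != j)%:R * (x k + x j) / (x k - x j) + (l != i)%:R * (x l + x i) / (x l - x i))
        + 2^-1 * f i l * f k j *
            ((i != k)%:R * (x i + x k) / (x i - x k) + (j != l)%:R * (x j + x l) / (x j - x l)
             + (x k + q * x j) / (x k - q * x j) - (x i + q * x l) / (x i - q * x l))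
        + 2^-1 * f i j * f i l *
            ((i != k)%:R * (x k + x i) / (x k - x i) + (x i + q * x l) / (x i - q * x l))
        + 2^-1 * f i j * f j l *
            ((j != k)%:R * (x j + x k) / (x j - x k) - (x j + q * x l) / (x j - q * x l))
        + 2^-1 * f k j * f k l *
            ((i != k)%:R * (x k + x i) / (x k - x i) - (x k + q * x j) / (x k - q * x j))
        + 2^-1 * f l j * f k l *
            ((i != l)%:R * (x i + x l) / (x i - x l) + (x l + q * x j) / (x l - q * x j)))]
  /\ [/\ (forall i : 'I_n, pbr q (xE i) (TE q) p = q / (1 - q) * x i * f i i),
      (forall (i : 'I_n) (ga : 'I_d), pbr q (aE i ga) (TE q) p =
          - (q / (2 * (1 - q))) *
            \sum_(k < n | k != i) V i k * (av p i ga - av p k ga) * f i k) &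
      (forall (j : 'I_n) (ep : 'I_d), pbr q (bE j ep) (TE q) p =
          q / (2 * (1 - q)) *
            \sum_(k < n | k != j) (V j k * bv p j ep * f j k - V k j * bv p k ep * f k j))].
Proof.
move=> x f V.
case: hp => hA hx0 hneq _ _.
have hq1 : q != 1 by move: (hq 1%N isT); rewrite expr1.
have hxq : forall i j : 'I_n, i != j -> xv p i != q * xv p j by move=> i j /hneq [].
have h1q : 1 - q != 0 by rewrite subr_eq0 eq_sym.
have hV : forall i k, V i k = cx p i k - (xv p i + q * xv p k) / (xv p i - q * xv p k) by [].
split; [split|split].
- exact: pbr_xx.
- exact: pbr_xf.
- move=> i j k l; exact: (ff_final hA hq1 hx0 hxq).
- exact: pbr_xT.
- move=> i ga; rewrite pbrE Lf_aE Lf_TE.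
  under eq_bigr => k _ do rewrite (aT_k hA hq1 hx0 hxq).
  rewrite (bigD1 i) //= subrr mulr0 mul0r add0r mulr_sumr [RHS]mulr_sumr.
  apply: eq_bigr => k _; rewrite !hV /f; field; by rewrite h1q (xq_neq hq1 hx0 hxq).
- move=> j ep; rewrite pbrE Lf_bE Lf_TE.
  under eq_bigr => k _ do rewrite (bT_k hA hq1 hx0 hxq).
  rewrite (bigD1 j) //= subrr mulr0 add0r mulr_sumr [RHS]mulr_sumr.
  apply: eq_bigr => k _; rewrite !hV /f; field; by rewrite h1q !(xq_neq hq1 hx0 hxq).
Qed.
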